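(* Let $\varepsilon>0$, $m\in\mathbb{N}$ and $K,T>0$ with $T\ge K$. Let $A,B\in\mathbb{Z}$ with $A\neq 0$. Then \[ \sum_{\substack{ |k| \leq K \\ (Ak+B, m ) \leq T }} (Ak+B,m) \ll_\varepsilon m^\varepsilon (A,m)\, T, \] where $k$ ranges over integers.
   Context: $(u,v)$ denotes the greatest common divisor. *)

(* Defs.v *)
From Stdlib Require Import Reals ZArith List.
Open Scope R_scope.

Definition zrange (M : Z) : list Z :=
  map (fun n : nat => (Z.of_nat n - M)%Z) (seq 0 (Z.to_nat (2 * M + 1))).

(* S(m,K,T,A,B) = sum over integers k with |k| <= K and (Ak+B, m) <= T
   of (Ak+B, m).  Every integer k with |k| <= K satisfies |k| < up K,
   so it suffices to range over |k| <= |up K| and filter. *)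
Definition gcd_sum (m : nat) (K T : R) (A B : Z) : R :=
  fold_right Rplus 0
    (map (fun k => IZR (Z.gcd (A * k + B) (Z.of_nat m)))
       (filter (fun k =>
          if Rle_dec (IZR (Z.abs k)) K then
            if Rle_dec (IZR (Z.gcd (A * k + B) (Z.of_nat m))) T then true else false
          else false)
        (zrange (Z.abs (up K))))).

(* Main.v *)
Require Import Defs.
From Stdlib Require Import Reals ZArith List.
Open Scope R_scope.
From Stdlib Require Import Lra Lia Sorting.Sorted.

Definition tau (m : nat) : nat :=
  length (List.filter (fun d => Nat.eqb (Nat.modulo m d) 0) (List.seq 1 m)).

Module NT.
From mathcomp Require Import ssreflect ssrfun ssrbool eqtype ssrnat seq div prime.
Local Open Scope nat_scope.

Lemma modE m d : (0 < d)%coq_nat -> Nat.eqb (Nat.modulo m d) 0 = (d %| m).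
Proof.
move=> hd; apply/idP/idP.
- move/Nat.eqb_eq/(Nat.mod_divide m d ltac:(lia)) => [z hz]; apply/dvdnP; exists z; exact hz.
- move/dvdnP=> [z hz]; apply/Nat.eqb_eq/(Nat.mod_divide m d ltac:(lia)); exists z; exact hz.
Qed.

Definition taun m := count (fun d => d %| m) (iota 1 m).

Lemma tau_aux m k : forall s, (0 < s)%coq_nat ->
  length (List.filter (fun d => Nat.eqb (Nat.modulo m d) 0) (List.seq s k))
  = count (fun d => d %| m) (iota s k).
Proof.
elim: k => [|k IH] s hs //=.
rewrite modE //; case: (s %| m) => /=; rewrite IH //; lia.
Qed.

Lemma tauE m : tau m = taun m.
Proof. by rewrite /tau /taun tau_aux. Qed.

Lemma expE p a : expn p a = Nat.pow p a.
Proof. elim: a => [|a IH] //; by rewrite expnS IH. Qed.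

Lemma tau_pmul p a n : prime p -> 0 < n -> coprime p n -> taun (p ^ a * n) <= a.+1 * taun n.
Proof.
move=> pp n0 cop.
rewrite /taun -!size_filter.
have -> : a.+1 * size (filter (fun d => d %| n) (iota 1 n)) =
  size [seq x * y | x <- [seq p ^ j | j <- iota 0 a.+1], y <- filter (fun d => d %| n) (iota 1 n)]
  by rewrite size_allpairs size_map size_iota.
apply: uniq_leq_size; first by rewrite filter_uniq // iota_uniq.
move=> d; rewrite mem_filter mem_iota => /andP [dv /andP [d0 _]].
apply/allpairsP.
have [e cope de] := pfactor_coprime pp d0.
have pa0 : 0 < p ^ a * n by rewrite muln_gt0 expn_gt0 prime_gt0.
exists (p ^ logn p d, e); split.
- change (p ^ logn p d \in [seq p ^ j | j <- iota 0 a.+1]); apply: map_f; rewrite mem_iota /= add0n ltnS.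
  have := dvdn_leq_log p pa0 dv.
  by rewrite mulnC logn_Gauss // pfactorK.
- have edn : e %| n.
    have : e %| n * p ^ a by rewrite mulnC; apply: dvdn_trans dv; rewrite de dvdn_mulr.
    rewrite Gauss_dvdl //; apply: coprimeXr; by rewrite coprime_sym.
  rewrite mem_filter edn mem_iota /= (dvdn_gt0 n0 edn) /= add1n ltnS dvdn_leq //.
- by rewrite mulnC.
Qed.

Lemma modE' m d : (0 < d)%coq_nat -> (Nat.modulo m d = 0)%coq_nat <-> (d %| m).
Proof. move=> hd; rewrite -modE //; split; [move=> h; apply/Nat.eqb_eq | move/Nat.eqb_eq]; done. Qed.

Lemma tau_step m : (1 < m)%coq_nat -> exists p a n,
  (2 <= p)%coq_nat /\ (0 < n)%coq_nat /\ (n < m)%coq_nat /\ m = (n * Nat.pow p a)%coq_nat /\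
  (tau m <= S a * tau n)%coq_nat /\
  (forall j, (0 < j)%coq_nat -> Nat.modulo n j = 0%coq_nat -> Nat.modulo m j = 0%coq_nat) /\
  Nat.modulo m p = 0%coq_nat /\ Nat.modulo n p <> 0%coq_nat.
Proof.
move/ltP=> m1.
have m0 : 0 < m by apply: ltn_trans m1.
have pp := pdiv_prime m1.
set p := pdiv m in pp *.
have [n cop hm] := pfactor_coprime pp m0.
set a := logn p m in hm.
have p2 : 1 < p := prime_gt1 pp.
have a0 : 0 < a by rewrite /a logn_gt0 mem_primes pp m0 pdiv_dvd.
have n0 : 0 < n by move: m0; rewrite hm muln_gt0 => /andP [].
have hpd : p %| m := pdiv_dvd m.
clearbody a p.
exists p, a, n; split; first by apply/leP.
split; first by apply/ltP.
split.
  apply/ltP; rewrite [X in _ < X]hm -[X in X < _]muln1 ltn_pmul2l //.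
  apply: (leq_trans p2); rewrite -{1}(expn1 p) leq_exp2l // p2.
split; first by rewrite [LHS]hm expE.
split.
  apply/leP; rewrite !tauE [X in taun X]hm mulnC; exact: tau_pmul.
split.
  move=> j hj hn; apply/(modE' m j hj); rewrite [X in _ %| X]hm; apply: dvdn_mulr; exact/(modE' n j hj).
have hp0 : (0 < p)%coq_nat by apply/ltP; apply: ltnW.
split; first by apply/(modE' _ _ hp0); exact: hpd.
move/(modE' _ _ hp0); apply/negP; by rewrite -prime_coprime.
Qed.

End NT.


Definition cnt (N m : nat) : nat :=
  length (List.filter (fun j => Nat.eqb (Nat.modulo m j) 0) (List.seq 2 N)).

Lemma filter_mono {A} (f g : A -> bool) l :
  (forall x, f x = true -> g x = true) -> (length (filter f l) <= length (filter g l))%nat.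
Proof.
  intros H; induction l as [|x l IH]; simpl; [lia|].
  destruct (f x) eqn:E1; [rewrite (H x E1); simpl; lia|].
  destruct (g x); simpl; lia.
Qed.

Lemma filter_mono_strict {A} (f g : A -> bool) l x :
  (forall y, f y = true -> g y = true) -> In x l -> g x = true -> f x = false ->
  (length (filter f l) < length (filter g l))%nat.
Proof.
  intros H Hin Hg Hf; induction l as [|y l IH]; simpl in *; [contradiction|].
  destruct Hin as [<-|Hin].
  - rewrite Hf, Hg; simpl. pose proof (filter_mono f g l H); lia.
  - specialize (IH Hin).
    destruct (f y) eqn:E1; [rewrite (H y E1); simpl; lia|].
    destruct (g y); simpl; lia.
Qed.

Lemma cnt_le N m : (cnt N m <= N)%nat.
Proof. unfold cnt. pose proof (filter_length_le (fun j => Nat.eqb (Nat.modulo m j) 0) (seq 2 N)).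
  rewrite length_seq in H; exact H. Qed.

Lemma Rpower_pos x y : 0 < Rpower x y.
Proof. unfold Rpower; apply exp_pos. Qed.

Lemma pow_factor (n p a : nat) eps : (0 < n)%nat -> (0 < p)%nat ->
  Rpower (INR (n * p ^ a)) eps = Rpower (INR n) eps * (Rpower (INR p) eps) ^ a.
Proof.
  intros hn hp.
  assert (0 < INR n) by (apply lt_0_INR; lia).
  assert (0 < INR p) by (apply lt_0_INR; lia).
  rewrite mult_INR, pow_INR.
  rewrite <- Rpower_mult_distr by (auto; apply pow_lt; auto).
  f_equal.
  rewrite <- (Rpower_pow a (INR p)) by auto.
  rewrite <- (Rpower_pow a (Rpower (INR p) eps)) by apply Rpower_pos.
  rewrite !Rpower_mult, Rmult_comm; reflexivity.
Qed.

Lemma tau_bound_c eps c N : 0 < eps -> 1 <= c ->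
  (forall a, INR (S a) <= c * (Rpower 2 eps) ^ a) ->
  (forall p a, (N <= p)%nat -> INR (S a) <= (Rpower (INR p) eps) ^ a) ->
  forall m, (0 < m)%nat -> INR (tau m) <= c ^ (cnt N m) * Rpower (INR m) eps.
Proof.
  intros he hc HA HB m.
  induction m as [m IH] using lt_wf_ind; intros hm0.
  destruct (Nat.eq_dec m 1) as [->|hm1].
  - replace (tau 1) with 1%nat by reflexivity.
    unfold Rpower; simpl INR; rewrite ln_1, Rmult_0_r, exp_0, Rmult_1_r.
    apply pow_R1_Rle; auto.
  - destruct (NT.tau_step m ltac:(lia)) as (p & a & n & hp2 & hn0 & hnm & hm & htau & hdiv & hpm & hpn).
    specialize (IH n hnm hn0).
    assert (Hf : Rpower (INR m) eps = Rpower (INR n) eps * (Rpower (INR p) eps) ^ a)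
      by (rewrite hm; apply pow_factor; lia).
    rewrite Hf.
    set (P := Rpower (INR p) eps) in *.
    set (Nn := Rpower (INR n) eps) in *.
    assert (hP : 0 < P) by apply Rpower_pos.
    assert (hNn : 0 < Nn) by apply Rpower_pos.
    assert (hPa : 0 < P ^ a) by (apply pow_lt; auto).
    assert (Htm : INR (tau m) <= INR (S a) * INR (tau n)) by (rewrite <- mult_INR; apply le_INR; exact htau).
    assert (hcn : 1 <= c ^ cnt N n) by (apply pow_R1_Rle; auto).
    assert (htn : 0 <= INR (tau n)) by apply pos_INR.
    assert (hmono : forall j, Nat.eqb (Nat.modulo n j) 0 = true -> Nat.eqb (Nat.modulo m j) 0 = true).
    { intros j hj. apply Nat.eqb_eq in hj. apply Nat.eqb_eq.
      destruct j; [simpl in hj; lia|]. apply hdiv; [lia|exact hj]. }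
    destruct (Nat.lt_ge_cases p (2 + N)) as [hpN|hpN].
    + assert (hcnt : (S (cnt N n) <= cnt N m)%nat).
      { unfold cnt. apply (filter_mono_strict _ _ _ p hmono).
        - apply in_seq; lia.
        - apply Nat.eqb_eq; exact hpm.
        - apply Nat.eqb_neq; exact hpn. }
      assert (H2P : Rpower 2 eps <= P).
      { unfold P; apply Rle_Rpower_l; [lra|]. split; [lra|].
        replace 2 with (INR 2) by (simpl; lra). apply le_INR; lia. }
      assert (HSa : INR (S a) <= c * P ^ a).
      { eapply Rle_trans; [apply HA|]. apply Rmult_le_compat_l; [lra|].
        apply pow_incr; split; [left; apply Rpower_pos|exact H2P]. }
      assert (Hc : c ^ S (cnt N n) <= c ^ cnt N m) by (apply Rle_pow; auto).
      simpl in Hc.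
      eapply Rle_trans; [exact Htm|].
      eapply Rle_trans.
      { apply Rmult_le_compat; [apply pos_INR|exact htn|exact HSa|exact IH]. }
      replace (c * P ^ a * (c ^ cnt N n * Nn)) with ((c * c ^ cnt N n) * (Nn * P ^ a)) by ring.
      apply Rmult_le_compat_r; [nra|exact Hc].
    + assert (HSa : INR (S a) <= P ^ a) by (apply HB; lia).
      assert (Hc : c ^ cnt N n <= c ^ cnt N m) by (apply Rle_pow; auto; apply filter_mono; exact hmono).
      eapply Rle_trans; [exact Htm|].
      eapply Rle_trans.
      { apply Rmult_le_compat; [apply pos_INR|exact htn|exact HSa|exact IH]. }
      replace (P ^ a * (c ^ cnt N n * Nn)) with (c ^ cnt N n * (Nn * P ^ a)) by ring.
      apply Rmult_le_compat_r; [nra|exact Hc].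
Qed.

Lemma tau_bound eps : 0 < eps -> exists C, 0 < C /\
  forall m, (0 < m)%nat -> INR (tau m) <= C * Rpower (INR m) eps.
Proof.
  intros he.
  set (x := Rpower 2 eps).
  assert (hx : 1 < x).
  { unfold x. rewrite <- (Rpower_O 2) at 1 by lra. apply Rpower_lt; lra. }
  set (h := x - 1).
  set (c := 1 + / h).
  assert (hh : 0 < h) by (unfold h; lra).
  assert (hc : 1 <= c) by (unfold c; pose proof (Rinv_0_lt_compat h hh); lra).
  set (N := Z.to_nat (up (Rpower 2 (/ eps)))).
  exists (c ^ N). split; [apply pow_lt; lra|].
  intros m hm.
  eapply Rle_trans.
  - apply (tau_bound_c eps c N he hc).
    + intros a. replace x with (1 + h) in * by (unfold h; ring).
      fold x. replace x with (1 + h) by (unfold h; ring).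
      pose proof (poly a h hh).
      pose proof (Rinv_0_lt_compat h hh).
      assert (0 <= INR a) by apply pos_INR.
      rewrite S_INR. unfold c.
      assert (INR a * h * / h = INR a) by (field; lra).
      nra.
    + intros p a hp.
      assert (hP2 : 2 <= Rpower (INR p) eps).
      { pose proof (archimed (Rpower 2 (/ eps))) as [h1 _].
        pose proof (Rpower_pos 2 (/ eps)).
        assert (INR N <= INR p) by (apply le_INR; exact hp).
        unfold N in H0. rewrite INR_IZR_INZ, Z2Nat.id in H0.
        2:{ apply le_IZR. apply Rle_trans with (Rpower 2 (/ eps)); left; assumption. }
        replace 2 with (Rpower (Rpower 2 (/ eps)) eps).
        2:{ rewrite Rpower_mult, Rinv_l by lra. apply Rpower_1; lra. }
        apply Rle_Rpower_l; lra. }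
      assert (INR (S a) <= 2 ^ a).
      { induction a as [|a IHa]; [simpl; lra|]. rewrite S_INR, <- tech_pow_Rmult.
        assert (1 <= 2 ^ a) by (apply pow_R1_Rle; lra). lra. }
      eapply Rle_trans; [exact H|]. apply pow_incr; lra.
    + exact hm.
  - apply Rmult_le_compat_r; [left; apply Rpower_pos|].
    apply Rle_pow; [lra|apply cnt_le].
Qed.


Definition sumR (l : list R) : R := fold_right Rplus 0 l.

Lemma sum_map_le {A} (f g : A -> R) l :
  (forall x, In x l -> f x <= g x) -> sumR (map f l) <= sumR (map g l).
Proof.
  induction l as [|x l IH]; intros H; simpl; [lra|].
  pose proof (H x (or_introl eq_refl)). pose proof (IH (fun y hy => H y (or_intror hy))). lra.
Qed.

Lemma sum_nonneg {A} (f : A -> R) l : (forall y, In y l -> 0 <= f y) -> 0 <= sumR (map f l).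
Proof.
  induction l as [|x l IH]; intros H; simpl; [lra|].
  pose proof (H x (or_introl eq_refl)). pose proof (IH (fun y hy => H y (or_intror hy))). lra.
Qed.

Lemma sum_In {A} (f : A -> R) l x :
  (forall y, In y l -> 0 <= f y) -> In x l -> f x <= sumR (map f l).
Proof.
  induction l as [|z l IH]; intros H Hx; simpl in *; [contradiction|].
  destruct Hx as [<-|Hx].
  - pose proof (sum_nonneg f l (fun y hy => H y (or_intror hy))). lra.
  - pose proof (H z (or_introl eq_refl)). pose proof (IH (fun y hy => H y (or_intror hy)) Hx). lra.
Qed.

Lemma sum_plus {A} (f g : A -> R) l : sumR (map (fun x => f x + g x) l) = sumR (map f l) + sumR (map g l).
Proof. induction l as [|x l IH]; simpl; [lra|]. rewrite IH; ring. Qed.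

Lemma sum_zero {A} (l : list A) : sumR (map (fun _ => 0) l) = 0.
Proof. induction l as [|x l IH]; simpl; [lra|]. rewrite IH; ring. Qed.

Lemma sum_exchange {A B} (h : A -> B -> R) L D :
  sumR (map (fun k => sumR (map (fun d => h k d) D)) L) =
  sumR (map (fun d => sumR (map (fun k => h k d) L)) D).
Proof.
  induction L as [|k L IH]; simpl.
  - rewrite sum_zero; reflexivity.
  - rewrite IH. rewrite (sum_plus (fun d => h k d) (fun d => sumR (map (fun k0 => h k0 d) L))). reflexivity.
Qed.

Lemma sum_indicator {A} (q : A -> bool) (c : R) l :
  sumR (map (fun k => if q k then c else 0) l) = c * INR (length (filter q l)).
Proof.
  induction l as [|x l IH]; simpl; [lra|]. rewrite IH.
  destruct (q x); simpl length; try rewrite S_INR; ring.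
Qed.

Lemma sum_const_le {A} (f : A -> R) l c :
  (forall x, In x l -> f x <= c) -> sumR (map f l) <= INR (length l) * c.
Proof.
  induction l as [|x l IH]; intros H; [simpl; lra|].
  change (f x + sumR (map f l) <= INR (S (length l)) * c).
  rewrite S_INR.
  pose proof (H x (or_introl eq_refl)). pose proof (IH (fun y hy => H y (or_intror hy))). lra.
Qed.

Lemma zrange_aux M s N : StronglySorted Z.lt (map (fun n : nat => (Z.of_nat n - M)%Z) (seq s N)).
Proof.
  revert s; induction N as [|N IH]; intros s; simpl; constructor; auto.
  apply Forall_forall; intros x hx. apply in_map_iff in hx. destruct hx as [n [<- hn]].
  apply in_seq in hn. lia.
Qed.

Lemma zrange_sorted M : StronglySorted Z.lt (zrange M).
Proof. apply zrange_aux. Qed.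

Lemma filter_sorted (f : Z -> bool) l : StronglySorted Z.lt l -> StronglySorted Z.lt (filter f l).
Proof.
  induction l as [|x l IH]; intros H; simpl; [constructor|].
  inversion H; subst. destruct (f x); [constructor|]; auto.
  apply Forall_forall; intros y hy. apply filter_In in hy. destruct hy as [hy _].
  rewrite Forall_forall in H3. auto.
Qed.

Lemma count_gap (q : Z -> bool) (dd y : R) :
  (forall k k', q k = true -> q k' = true -> (k < k')%Z -> IZR k + dd <= IZR k') ->
  forall l, StronglySorted Z.lt l -> forall x, x <= y + dd ->
  (forall k, In k l -> q k = true -> x <= IZR k <= y) ->
  INR (length (filter q l)) * dd <= y - x + dd.
Proof.
  intros Hg l; induction l as [|k l IH]; intros Hs x hx Hb; simpl; [lra|].
  inversion Hs; subst. rewrite Forall_forall in H2.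
  destruct (q k) eqn:E.
  - simpl length; rewrite S_INR.
    pose proof (Hb k (or_introl eq_refl) E) as hk.
    assert (IH' := IH H1 (IZR k + dd) ltac:(lra)
      (fun k' hin hq => conj (Hg k k' E hq (H2 k' hin)) (proj2 (Hb k' (or_intror hin) hq)))).
    lra.
  - apply IH; auto. intros k' hin hq. apply Hb; [right; exact hin|exact hq].
Qed.


Definition qd (A B : Z) (d : nat) (k : Z) : bool := Z.eqb ((A * k + B) mod Z.of_nat d) 0.
Definition hh (A B : Z) (T : R) (k : Z) (d : nat) : R :=
  if Rle_dec (INR d) T then (if qd A B d k then INR d else 0) else 0.

Lemma hh_nonneg A B T k d : 0 <= hh A B T k d.
Proof. unfold hh. destruct Rle_dec; [destruct qd; [apply pos_INR|lra]|lra]. Qed.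

Lemma per_d (m d : nat) (K T : R) (A B : Z) L :
  (1 <= m)%nat -> (1 <= d)%nat -> Nat.modulo m d = 0%nat -> 0 < K -> K <= T ->
  StronglySorted Z.lt L -> (forall k, In k L -> -K <= IZR k <= K) ->
  sumR (map (fun k => hh A B T k d) L) <= 3 * IZR (Z.gcd A (Z.of_nat m)) * T.
Proof.
  intros hm hd hmd hK hKT HL Hb.
  set (G := Z.gcd A (Z.of_nat m)).
  assert (hG0 : (0 < G)%Z).
  { pose proof (Z.gcd_nonneg A (Z.of_nat m)).
    assert (G <> 0%Z) by (intro E; apply Z.gcd_eq_0 in E; lia). unfold G in *; lia. }
  assert (hG1 : 1 <= IZR G) by (apply IZR_le; lia).
  unfold hh. destruct (Rle_dec (INR d) T) as [hdT|hdT].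
  2:{ rewrite sum_zero. assert (0 <= T) by lra. nra. }
  rewrite sum_indicator.
  set (dz := Z.of_nat d).
  assert (hdz : (0 < dz)%Z) by (unfold dz; lia).
  set (gz := Z.gcd A dz).
  assert (hgz : (0 < gz)%Z).
  { pose proof (Z.gcd_nonneg A dz).
    assert (gz <> 0%Z) by (intro E; apply Z.gcd_eq_0 in E; lia). unfold gz in *; lia. }
  destruct (Z.gcd_divide_r A dz) as [q hq]. fold gz in hq.
  destruct (Z.gcd_divide_l A dz) as [a' ha']. fold gz in ha'.
  assert (hq0 : (0 < q)%Z) by (apply (Z.mul_pos_cancel_r q gz hgz); rewrite <- hq; exact hdz).
  assert (hcop : Z.gcd a' q = 1%Z).
  { assert (hdz0 : gz <> 0%Z) by lia.
    pose proof (Z.gcd_div_gcd A dz gz hdz0 eq_refl) as E.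
    rewrite ha', hq, !Z.div_mul in E by lia. exact E. }
  assert (hgzG : (gz <= G)%Z).
  { apply Z.divide_pos_le; [exact hG0|]. apply Z.gcd_greatest.
    - apply Z.gcd_divide_l.
    - apply Z.divide_trans with dz; [apply Z.gcd_divide_r|].
      apply (Nat.mod_divide m d ltac:(lia)) in hmd. destruct hmd as [z hz].
      exists (Z.of_nat z). unfold dz. rewrite hz, Nat2Z.inj_mul. reflexivity. }
  assert (Hgap : forall k k', qd A B d k = true -> qd A B d k' = true -> (k < k')%Z ->
            IZR k + IZR q <= IZR k').
  { intros k k' h1 h2 hkk. unfold qd in h1, h2. fold dz in h1, h2.
    apply Z.eqb_eq, Z.mod_divide in h1; [|lia]. apply Z.eqb_eq, Z.mod_divide in h2; [|lia].
    assert (h3 : (dz | A * (k' - k))%Z).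
    { replace (A * (k' - k))%Z with ((A * k' + B) - (A * k + B))%Z by ring.
      apply Z.divide_sub_r; auto. }
    rewrite hq, ha' in h3.
    replace (a' * gz * (k' - k))%Z with ((a' * (k' - k)) * gz)%Z in h3 by ring.
    apply Z.mul_divide_cancel_r in h3; [|lia].
    apply Z.gauss in h3; [|rewrite Z.gcd_comm; exact hcop].
    apply Z.divide_pos_le in h3; [|lia].
    rewrite <- plus_IZR. apply IZR_le. lia. }
  pose proof (count_gap (qd A B d) (IZR q) K Hgap L HL (-K)) as HC.
  assert (hq1 : 1 <= IZR q) by (apply IZR_le; lia).
  specialize (HC ltac:(lra) (fun k hin _ => Hb k hin)).
  set (len := INR (length (filter (qd A B d) L))) in *.
  assert (hlen : 0 <= len) by apply pos_INR.
  assert (hdq : INR d = IZR q * IZR gz).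
  { rewrite INR_IZR_INZ. fold dz. rewrite hq, mult_IZR. reflexivity. }
  assert (hgzG' : IZR gz <= IZR G) by (apply IZR_le; exact hgzG).
  assert (hgz1 : 1 <= IZR gz) by (apply IZR_le; lia).
  rewrite hdq in *.
  assert (E1 : IZR q * IZR gz * len <= IZR gz * (2 * K) + IZR q * IZR gz).
  { replace (IZR q * IZR gz * len) with (IZR gz * (len * IZR q)) by ring.
    replace (IZR gz * (2 * K) + IZR q * IZR gz) with (IZR gz * (K - - K + IZR q)) by ring.
    apply Rmult_le_compat_l; lra. }
  assert (E2 : IZR gz * (2 * K) <= IZR G * (2 * T)) by (apply Rmult_le_compat; lra).
  assert (E3 : T <= IZR G * T) by nra.
  lra.
Qed.

Lemma step1 (m : nat) (T : R) (A B k : Z) :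
  (1 <= m)%nat -> IZR (Z.gcd (A * k + B) (Z.of_nat m)) <= T ->
  IZR (Z.gcd (A * k + B) (Z.of_nat m)) <=
  sumR (map (hh A B T k) (filter (fun d => Nat.eqb (Nat.modulo m d) 0) (seq 1 m))).
Proof.
  intros hm hgT.
  set (g := Z.gcd (A * k + B) (Z.of_nat m)) in *.
  assert (hg0 : (0 < g)%Z).
  { pose proof (Z.gcd_nonneg (A * k + B) (Z.of_nat m)).
    assert (g <> 0%Z) by (intro E; apply Z.gcd_eq_0 in E; lia). unfold g in *; lia. }
  destruct (Z.gcd_divide_r (A * k + B) (Z.of_nat m)) as [z hz]. fold g in hz.
  assert (hz0 : (0 < z)%Z) by (apply (Z.mul_pos_cancel_r z g hg0); rewrite <- hz; lia).
  set (d0 := Z.to_nat g).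
  assert (hd0 : Z.of_nat d0 = g) by (unfold d0; apply Z2Nat.id; lia).
  assert (hgm : (g <= Z.of_nat m)%Z) by nia.
  assert (E : hh A B T k d0 = IZR g).
  { unfold hh. rewrite INR_IZR_INZ, hd0.
    destruct (Rle_dec (IZR g) T) as [_|c]; [|contradiction].
    unfold qd. rewrite hd0.
    replace (Z.eqb ((A * k + B) mod g) 0) with true; [reflexivity|].
    symmetry; apply Z.eqb_eq, Z.mod_divide; [lia|]. apply Z.gcd_divide_l. }
  rewrite <- E. apply sum_In.
  - intros; apply hh_nonneg.
  - apply filter_In. split.
    + apply in_seq. lia.
    + apply Nat.eqb_eq. apply (Nat.mod_divide m d0 ltac:(lia)).
      exists (Z.to_nat z). apply Nat2Z.inj. rewrite Nat2Z.inj_mul, hd0, Z2Nat.id by lia. exact hz.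
Qed.

Theorem lemma15 :
  forall eps : R, 0 < eps ->
  exists C : R, 0 < C /\
    forall (m : nat) (K T : R) (A B : Z),
      (1 <= m)%nat -> 0 < K -> 0 < T -> K <= T -> A <> 0%Z ->
      gcd_sum m K T A B <=
        C * Rpower (INR m) eps * IZR (Z.gcd A (Z.of_nat m)) * T.
Proof.
  intros eps he.
  destruct (tau_bound eps he) as [C0 [hC0 HC0]].
  exists (3 * C0). split; [lra|].
  intros m K T A B hm hK hT hKT hA.
  set (D := filter (fun d => Nat.eqb (Nat.modulo m d) 0) (seq 1 m)).
  set (G := IZR (Z.gcd A (Z.of_nat m))).
  assert (hG : 0 <= G) by (apply IZR_le, Z.gcd_nonneg).
  unfold gcd_sum.
  set (L := filter _ (zrange (Z.abs (up K)))).
  assert (HL : StronglySorted Z.lt L) by (apply filter_sorted, zrange_sorted).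
  assert (HLb : forall k, In k L -> -K <= IZR k <= K /\ IZR (Z.gcd (A * k + B) (Z.of_nat m)) <= T).
  { intros k hk. apply filter_In in hk. destruct hk as [_ hk].
    destruct (Rle_dec (IZR (Z.abs k)) K) as [h1|]; [|discriminate].
    destruct (Rle_dec (IZR (Z.gcd (A * k + B) (Z.of_nat m))) T) as [h2|]; [|discriminate].
    split; [|exact h2].
    rewrite abs_IZR in h1. split; [|apply Rle_trans with (Rabs (IZR k)); [apply RRle_abs|exact h1]].
    pose proof (Rabs_Ropp (IZR k)). pose proof (Rle_abs (- IZR k)). lra. }
  apply Rle_trans with (sumR (map (fun k => sumR (map (hh A B T k) D)) L)).
  { apply sum_map_le. intros k hk. apply step1; [exact hm|]. apply (HLb k hk). }
  change (sumR (map (fun k => sumR (map (fun d => hh A B T k d) D)) L) <=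
          3 * C0 * Rpower (INR m) eps * G * T).
  rewrite sum_exchange.
  apply Rle_trans with (INR (length D) * (3 * G * T)).
  { apply sum_const_le. intros d hd. unfold D in hd. apply filter_In in hd.
    destruct hd as [hd1 hd2]. apply in_seq in hd1. apply Nat.eqb_eq in hd2.
    apply (per_d m d K T A B L hm ltac:(lia) hd2 hK hKT HL).
    intros k hk; apply (HLb k hk). }
  assert (Ht : INR (length D) <= C0 * Rpower (INR m) eps) by (apply (HC0 m); lia).
  assert (0 <= 3 * G * T) by nra.
  replace (3 * C0 * Rpower (INR m) eps * G * T) with (C0 * Rpower (INR m) eps * (3 * G * T)) by ring.
  apply Rmult_le_compat_r; auto.
Qed.
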